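(* Let $S$ be an affine semigroup, $K$ a field, $F$ a nonempty face of $\mathrm{pos}(S)$, and $\gamma_1,\ldots,\gamma_k\in S$. Suppose that $\widetilde{S_F}$ is a free commutative monoid and the images of $\gamma_1,\ldots,\gamma_k$ form a basis of it. Then: (1) $F$ is contained in precisely $k$ facets $F_i=\mathrm{pos}(S)\cap H_i$ ($i=1,\ldots,k$) of $\mathrm{pos}(S)$, and $F=F_1\cap\cdots\cap F_k$; (2) $\sigma_i(\gamma_j)=\delta_{ij}$ for all $1\le i,j\le k$, where $\sigma_i$ is the primitive linear form associated with $H_i$; (3) $\mathrm{grp}(S\cap F)=\mathrm{grp}(S)\cap H_1\cap\cdots\cap H_k$.
   Context: An affine semigroup is a finitely generated submonoid $S$ of $\mathbb{Z}^n$ (containing $0$) with $\mathrm{grp}(S)=\mathbb{Z}^n$. $\mathrm{pos}(S)$ is the set of nonnegative real linear combinations of elements of $S$; a face is its intersection with a supporting hyperplane, and a facet is a face of codimension one (codimension $=n-\dim$ of the linear span). Each facet has the form $\mathrm{pos}(S)\cap H$ where $H=\{\sigma=0\}$ and $\sigma$ is a primitive linear form (a linear form with relatively prime integer coefficients) with $\sigma\ge 0$ on $\mathrm{pos}(S)$; $\sigma$ is called the primitive linear form associated with $H$. $S_F=\{\alpha-\beta:\alpha\in S,\beta\in S\cap F\}$, whose group of units is $\mathrm{grp}(S\cap F)$, and $\widetilde{S_F}$ is the quotient of $S_F$ by its group of units. *)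

(* Defs.v *)
From HB Require Import structures.
From mathcomp Require Import all_boot all_order all_algebra.
Set Implicit Arguments. Unset Strict Implicit. Unset Printing Implicit Defensive.
Import Order.TTheory GRing.Theory Num.Theory.
Local Open Scope ring_scope.

(* Integer points of Z^n are row vectors 'rV[int]_n; points of R^n are
   'rV[R]_n for a real field R (the paper's R is an instance). *)

Definition inS (n : nat) (gens : seq 'rV[int]_n) (v : 'rV[int]_n) : Prop :=
  exists c : 'I_(size gens) -> nat, v = \sum_(i < size gens) gens`_i *+ c i.

Definition grp (n : nat) (A : 'rV[int]_n -> Prop) (v : 'rV[int]_n) : Prop :=
  exists a b, A a /\ A b /\ v = a - b.

Definition affine_semigroup (n : nat) (gens : seq 'rV[int]_n) : Prop :=
  forall v : 'rV[int]_n, grp (inS gens) v.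

Definition realv (R : realFieldType) (n : nat) (v : 'rV[int]_n) : 'rV[R]_n :=
  map_mx (fun z : int => z%:~R) v.

Definition pos (R : realFieldType) (n : nat) (gens : seq 'rV[int]_n)
    (x : 'rV[R]_n) : Prop :=
  exists (m : nat) (c : 'I_m -> R) (a : 'I_m -> 'rV[int]_n),
    (forall i, inS gens (a i)) /\ (forall i, 0 <= c i) /\
    x = \sum_(i < m) c i *: realv R (a i).

Definition lf (R : realFieldType) (n : nat) (t x : 'rV[R]_n) : R :=
  \sum_(j < n) t 0 j * x 0 j.

Definition lfZ (n : nat) (t x : 'rV[int]_n) : int :=
  \sum_(j < n) t 0 j * x 0 j.

(* F is a face of pos(S): F = pos(S) ∩ {t = 0} for a linear form t that is
   nonnegative on pos(S) (t = 0 allowed, giving the improper face pos(S)). *)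
Definition is_face (R : realFieldType) (n : nat) (gens : seq 'rV[int]_n)
    (F : 'rV[R]_n -> Prop) : Prop :=
  exists t : 'rV[R]_n,
    (forall x, pos gens x -> 0 <= lf t x) /\
    (forall x, F x <-> (pos gens x /\ lf t x = 0)).

Definition dim_span (R : realFieldType) (n : nat) (A : 'rV[R]_n -> Prop)
    (d : nat) : Prop :=
  (exists (m : nat) (vs : 'I_m -> 'rV[R]_n),
      (forall i, A (vs i)) /\ \rank (\matrix_(i < m) vs i) = d) /\
  (forall (m : nat) (vs : 'I_m -> 'rV[R]_n),
      (forall i, A (vs i)) -> (\rank (\matrix_(i < m) vs i) <= d)%N).

Definition is_facet (R : realFieldType) (n : nat) (gens : seq 'rV[int]_n)
    (G : 'rV[R]_n -> Prop) : Prop :=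
  is_face gens G /\ exists d : nat, dim_span G d /\ d.+1 = n.

Definition primitive (n : nat) (s : 'rV[int]_n) : Prop :=
  (\big[gcdn/0%N]_(j < n) absz (s ord0 j) = 1)%N.

Definition inSF (R : realFieldType) (n : nat) (gens : seq 'rV[int]_n)
    (F : 'rV[R]_n -> Prop) (v : 'rV[int]_n) : Prop :=
  inS gens v /\ F (realv R v).

Definition S_F (R : realFieldType) (n : nat) (gens : seq 'rV[int]_n)
    (F : 'rV[R]_n -> Prop) (v : 'rV[int]_n) : Prop :=
  exists a b, inS gens a /\ inSF gens F b /\ v = a - b.

(* The quotient ~S_F = S_F / grp(S ∩ F) is a free commutative monoid with
   basis the images of gam_1..gam_k: every class of S_F is the class of a
   unique N-combination of the gam_j (classes x ~ y iff x - y ∈ grp(S∩F)). *)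
Definition free_basis_mod (R : realFieldType) (n k : nat)
    (gens : seq 'rV[int]_n) (F : 'rV[R]_n -> Prop)
    (gam : 'I_k -> 'rV[int]_n) : Prop :=
  (forall x, S_F gens F x ->
     exists c : 'I_k -> nat,
       grp (inSF gens F) (x - \sum_(j < k) gam j *+ c j)) /\
  (forall c d : 'I_k -> nat,
     grp (inSF gens F) (\sum_(j < k) gam j *+ c j - \sum_(j < k) gam j *+ d j) ->
     forall j, c j = d j).

Definition hyp_section (R : realFieldType) (n : nat) (gens : seq 'rV[int]_n)
    (s : 'rV[int]_n) (x : 'rV[R]_n) : Prop :=
  pos gens x /\ lf (realv R s) x = 0.

(* Main.v *)
Require Import Defs.
From HB Require Import structures.
From mathcomp Require Import all_boot all_order all_algebra.
From Stdlib Require Import ClassicalEpsilon Classical.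
Import Order.TTheory GRing.Theory Num.Theory.
Local Open Scope ring_scope.

Module Aux1.
Set Implicit Arguments. Unset Strict Implicit. Unset Printing Implicit Defensive.

Lemma realvD (R : realFieldType) n (a b : 'rV[int]_n) :
  realv R (a + b) = realv R a + realv R b.
Proof. by rewrite /realv raddfD. Qed.
Lemma realv0 (R : realFieldType) n : realv R (0 : 'rV[int]_n) = 0.
Proof. by rewrite /realv raddf0. Qed.
Lemma realvB (R : realFieldType) n (a b : 'rV[int]_n) :
  realv R (a - b) = realv R a - realv R b.
Proof. by rewrite /realv raddfB. Qed.
Lemma realvMz (R : realFieldType) n (a : 'rV[int]_n) z :
  realv R (a *~ z) = z%:~R *: realv R a.
Proof. by rewrite /realv raddfMz scaler_int. Qed.
Lemma realvMn (R : realFieldType) n (a : 'rV[int]_n) (z : nat) :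
  realv R (a *+ z) = z%:R *: realv R a.
Proof. by rewrite /realv raddfMn scaler_nat. Qed.
Lemma realv_sum (R : realFieldType) n m (f : 'I_m -> 'rV[int]_n) :
  realv R (\sum_(i < m) f i) = \sum_(i < m) realv R (f i).
Proof. by rewrite /realv raddf_sum. Qed.

Lemma lfD (R : realFieldType) n (t x y : 'rV[R]_n) : lf t (x + y) = lf t x + lf t y.
Proof. by rewrite /lf -big_split /=; apply: eq_bigr => j _; rewrite mxE mulrDr. Qed.
Lemma lf0 (R : realFieldType) n (t : 'rV[R]_n) : lf t 0 = 0.
Proof. by rewrite /lf big1 // => j _; rewrite mxE mulr0. Qed.
Lemma lfS (R : realFieldType) n (t x : 'rV[R]_n) c : lf t (c *: x) = c * lf t x.
Proof. by rewrite /lf mulr_sumr; apply: eq_bigr => j _; rewrite mxE mulrCA. Qed.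
Lemma lfN (R : realFieldType) n (t x : 'rV[R]_n) : lf t (- x) = - lf t x.
Proof. by rewrite -scaleN1r lfS mulN1r. Qed.
Lemma lfB (R : realFieldType) n (t x y : 'rV[R]_n) : lf t (x - y) = lf t x - lf t y.
Proof. by rewrite lfD lfN. Qed.
Lemma lf_sum (R : realFieldType) n m (t : 'rV[R]_n) (f : 'I_m -> 'rV[R]_n) :
  lf t (\sum_(i < m) f i) = \sum_(i < m) lf t (f i).
Proof. elim/big_rec2: _ => [|i y1 y2 _ <-]; by rewrite ?lf0 ?lfD. Qed.
Lemma lf_realv (R : realFieldType) n (s v : 'rV[int]_n) :
  lf (realv R s) (realv R v) = (lfZ s v)%:~R.
Proof.
by rewrite /lf /lfZ rmorph_sum; apply: eq_bigr => j _; rewrite !mxE rmorphM.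
Qed.

Lemma inS0 n (gens : seq 'rV[int]_n) : inS gens 0.
Proof. by exists (fun _ => 0%N); rewrite big1 // => i _; rewrite mulr0n. Qed.
Lemma inSD n (gens : seq 'rV[int]_n) a b : inS gens a -> inS gens b -> inS gens (a + b).
Proof.
move=> [c1 ->] [c2 ->]; exists (fun i => c1 i + c2 i)%N.
by rewrite -big_split; apply: eq_bigr => i _; rewrite mulrnDr.
Qed.
Lemma pos_realv (R : realFieldType) n (gens : seq 'rV[int]_n) a :
  inS gens a -> pos gens (realv R a).
Proof.
move=> ha; exists 1%N, (fun _ => 1), (fun _ => a); split=> //; split=> // .
by rewrite big_ord1 scale1r.
Qed.
Lemma pos0 (R : realFieldType) n (gens : seq 'rV[int]_n) : pos gens (0 : 'rV[R]_n).
Proof. by rewrite -(realv0 R); apply/pos_realv/inS0. Qed.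

Lemma pos_lf_ge0 (R : realFieldType) n (gens : seq 'rV[int]_n) (w : 'rV[R]_n) m
    (c : 'I_m -> R) (a : 'I_m -> 'rV[int]_n) :
  (forall x, pos gens x -> 0 <= lf w x) -> (forall i, inS gens (a i)) ->
  (forall i, 0 <= c i) ->
  lf w (\sum_(i < m) c i *: realv R (a i)) = 0 ->
  forall i, c i = 0 \/ lf w (realv R (a i)) = 0.
Proof.
move=> hw ha hc; rewrite lf_sum => h0 i.
have hge : forall j, predT j -> 0 <= lf w (c j *: realv R (a j)).
  by move=> j _; rewrite lfS mulr_ge0 // hw //; exact: pos_realv.
have := psumr_eq0P hge h0 (i:=i) isT.
rewrite lfS => /eqP; rewrite mulf_eq0 => /orP[/eqP|/eqP]; by auto.
Qed.


Lemma rank_ker (R : realFieldType) n m p (V : 'M[R]_(m,n)) (w y : 'I_p -> 'rV[R]_n) :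
  (forall a b, lf (w a) (y b) = (a == b)%:R) ->
  (forall l a, lf (w a) (row l V) = 0) -> (\rank V + p <= n)%N.
Proof.
move=> hwy hV.
pose W : 'M[R]_(p, n) := \matrix_a w a.
pose Y : 'M[R]_(p, n) := \matrix_b y b.
have hYW : Y *m W^T = 1%:M.
  apply/matrixP => a b; rewrite !mxE eq_sym -(hwy b a) /lf.
  by apply: eq_bigr => l _; rewrite !mxE mulrC.
have hVW : V *m W^T = 0.
  apply/matrixP => l a; rewrite [RHS]mxE -(hV l a) mxE /lf.
  by apply: eq_bigr => j _; rewrite !mxE mulrC.
have hp : (p <= \rank W^T)%N.
  by rewrite -{1}(mxrank1 R p) -hYW mxrankM_maxr.
have hVk : (\rank V <= n - \rank W^T)%N.
  by rewrite -mxrank_ker; apply: mxrankS; apply/sub_kermxP.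
have hr : (\rank W^T <= n)%N by apply: rank_leq_row.
apply: (leq_trans (leq_add hVk hp)).
by rewrite subnK.
Qed.

Lemma rank_full (R : realFieldType) n m (M : 'M[R]_(m,n)) :
  (forall l : 'I_n, exists z : 'rV[R]_m, delta_mx 0 l = z *m M) -> (n <= \rank M)%N.
Proof.
move=> h.
have hs : (1%:M <= M)%MS.
  apply/row_subP => l; rewrite row1; have [z ->] := h l; exact: submxMl.
by rewrite -{1}(mxrank1 R n); apply: mxrankS.
Qed.

Lemma rank_full1 (R : realFieldType) n m (M : 'M[R]_(m,n)) (y : 'rV[R]_n) :
  (forall l : 'I_n, exists (z : 'rV[R]_m) (c : R), delta_mx 0 l = z *m M + c *: y) ->
  (n <= \rank M + 1)%N.
Proof.
move=> h.
have h1 : (n <= \rank (col_mx M y))%N.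
  apply: rank_full => l; have [z [c ->]] := h l.
  by exists (row_mx z c%:M); rewrite mul_row_col mul_scalar_mx.
apply: (leq_trans h1); rewrite -addsmxE.
apply: (leq_trans (mxrank_adds_leqif M y)).
by rewrite leq_add2l rank_leq_row.
Qed.

End Aux1.
Import Aux1.

Module Aux2.

Lemma grp0 n (A : 'rV[int]_n -> Prop) : A 0 -> grp A 0.
Proof. by move=> h; exists 0, 0; rewrite subrr. Qed.
Lemma grpD n (A : 'rV[int]_n -> Prop) :
  (forall a b, A a -> A b -> A (a + b)) ->
  forall u v, grp A u -> grp A v -> grp A (u + v).
Proof.
move=> hD u v [a [b [ha [hb ->]]]] [c [d [hc [hd ->]]]].
exists (a + c), (b + d); split; first exact: hD.
split; first exact: hD.
by rewrite opprD addrACA.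
Qed.
Lemma grpN n (A : 'rV[int]_n -> Prop) u : grp A u -> grp A (- u).
Proof. by move=> [a [b [ha [hb ->]]]]; exists b, a; rewrite opprB. Qed.
Lemma grpMz n (A : 'rV[int]_n -> Prop) :
  A 0 -> (forall a b, A a -> A b -> A (a + b)) ->
  forall u z, grp A u -> grp A (u *~ z).
Proof.
move=> h0 hD u z hu.
have hn : forall m : nat, grp A (u *+ m).
  elim=> [|m IH]; first by rewrite mulr0n; apply: grp0.
  by rewrite mulrS; apply: grpD.
case: z => m; first by rewrite -pmulrn; apply: hn.
by rewrite NegzE mulrNz; apply: grpN; rewrite -pmulrn; apply: hn.
Qed.
Lemma grp_sum n (A : 'rV[int]_n -> Prop) m (f : 'I_m -> 'rV[int]_n) :
  A 0 -> (forall a b, A a -> A b -> A (a + b)) ->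
  (forall i, grp A (f i)) -> grp A (\sum_(i < m) f i).
Proof.
move=> h0 hD hf; elim/big_ind: _ => //; first exact: grp0.
exact: grpD.
Qed.

Section Main.
Variables (R : realFieldType) (n : nat) (gens : seq 'rV[int]_n)
  (F : 'rV[R]_n -> Prop) (t : 'rV[R]_n) (k : nat) (gam : 'I_k -> 'rV[int]_n).
Hypotheses (hS : affine_semigroup gens)
  (ht : forall x, pos gens x -> 0 <= lf t x)
  (hFt : forall x, F x <-> pos gens x /\ lf t x = 0)
  (hgam : forall j, inS gens (gam j)) (hfree : free_basis_mod gens F gam).

Local Notation G := (grp (inSF gens F)).
Local Notation comb a := (\sum_(j < k) gam j *~ a j).

Lemma inSF0 : inSF gens F 0.
Proof.
split; first exact: inS0.
by apply/hFt; rewrite realv0 lf0; split=> //; apply: pos0.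
Qed.
Lemma inSFD a b : inSF gens F a -> inSF gens F b -> inSF gens F (a + b).
Proof.
move=> [ha /hFt [_ ha0]] [hb /hFt [_ hb0]]; split; first exact: inSD.
apply/hFt; split; first by apply/pos_realv/inSD.
by rewrite realvD lfD ha0 hb0 addr0.
Qed.
Lemma G0 : G 0. Proof. apply: grp0; exact: inSF0. Qed.
Lemma GD u v : G u -> G v -> G (u + v). Proof. apply: grpD; exact: inSFD. Qed.
Lemma GN u : G u -> G (- u). Proof. exact: grpN. Qed.
Lemma GB u v : G u -> G v -> G (u - v). Proof. by move=> hu hv; apply/GD/GN. Qed.
Lemma GMz u z : G u -> G (u *~ z). Proof. apply: grpMz; [exact: inSF0 | exact: inSFD]. Qed.
Lemma Gsum m (f : 'I_m -> 'rV[int]_n) : (forall i, G (f i)) -> G (\sum_(i < m) f i).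
Proof. apply: grp_sum; [exact: inSF0 | exact: inSFD]. Qed.
Lemma G_t0 v : G v -> lf t (realv R v) = 0.
Proof.
move=> [a [b [[_ /hFt [_ ha]] [[_ /hFt [_ hb]] ->]]]].
by rewrite realvB lfB ha hb subrr.
Qed.

Lemma comb_nat (c : 'I_k -> nat) : \sum_(j < k) gam j *+ c j = comb (fun j => (c j)%:Z).
Proof. by apply: eq_bigr => j _; rewrite -pmulrn. Qed.

Lemma uniq_comb (a a' : 'I_k -> int) : G (comb a - comb a') -> forall j, a j = a' j.
Proof.
move=> h j.
pose b j := a j - a' j.
pose c j := match b j with Posz m => m | Negz _ => 0%N end.
pose d j := match b j with Posz _ => 0%N | Negz m => m.+1 end.
have hb : forall j, b j = (c j)%:Z - (d j)%:Z.
  by move=> i; rewrite /c /d; case: (b i) => m; rewrite ?subr0 ?NegzE ?sub0r.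
have hcd : G (\sum_(j < k) gam j *+ c j - \sum_(j < k) gam j *+ d j).
  suff -> : \sum_(j < k) gam j *+ c j - \sum_(j < k) gam j *+ d j = comb a - comb a' by [].
  rewrite !comb_nat -!sumrB; apply: eq_bigr => i _.
  by rewrite -!mulrzBr -hb.
have := hfree.2 c d hcd j.
have : b j = 0 -> a j = a' j by move/eqP; rewrite subr_eq0 => /eqP.
move=> hfin; rewrite /c /d; case E: (b j) => [m|m] //.
by move=> hm; apply: hfin; rewrite E hm.
Qed.

Lemma decomp_ex v : exists a : 'I_k -> int, G (v - comb a).
Proof.
have hSF : forall s, inS gens s -> exists c : 'I_k -> nat,
    G (s - \sum_(j < k) gam j *+ c j).
  move=> s hs; apply: hfree.1; exists s, 0; split=> //; split; first exact: inSF0.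
  by rewrite subr0.
have [s [s' [hs [hs' ->]]]] := hS v.
have [c hc] := hSF s hs; have [c' hc'] := hSF s' hs'.
exists (fun j => (c j)%:Z - (c' j)%:Z).
have -> : s - s' - comb (fun j => (c j)%:Z - (c' j)%:Z) =
   (s - \sum_(j < k) gam j *+ c j) - (s' - \sum_(j < k) gam j *+ c' j).
  rewrite !comb_nat.
  have -> : comb (fun j => (c j)%:Z - (c' j)%:Z) =
     comb (fun j => (c j)%:Z) - comb (fun j => (c' j)%:Z).
    by rewrite -sumrB; apply: eq_bigr => i _; rewrite mulrzBr.
  by rewrite !opprB addrACA [in RHS]addrACA [in RHS](addrC (- _)).  
exact: GB.
Qed.

Definition coef v : 'I_k -> int :=
  proj1_sig (constructive_indefinite_description _ (decomp_ex v)).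
Lemma coef_spec v : G (v - comb (coef v)).
Proof. exact: (proj2_sig (constructive_indefinite_description _ (decomp_ex v))). Qed.
Lemma coef_eq v a : G (v - comb a) -> forall j, coef v j = a j.
Proof.
move=> h; apply: uniq_comb.
have -> : comb (coef v) - comb a = (v - comb a) - (v - comb (coef v)).
  by rewrite opprB [RHS]addrC addrA subrK.
by apply: GB => //; apply: coef_spec.
Qed.
Lemma coefS a j : inS gens a -> 0 <= coef a j.
Proof.
move=> ha.
have [c hc] : exists c : 'I_k -> nat, G (a - \sum_(j < k) gam j *+ c j).
  apply: hfree.1; exists a, 0; split=> //; split; first exact: inSF0.
  by rewrite subr0.
by rewrite comb_nat in hc; rewrite (coef_eq _ _ hc).
Qed.
Lemma coefG v j : G v -> coef v j = 0.
Proof.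
move=> hv; rewrite (coef_eq v (fun _ => 0)) //.
by rewrite big1 ?subr0 // => i _; rewrite mulr0z.
Qed.
Lemma coef_gam i j : coef (gam j) i = if i == j then 1 else 0.
Proof.
rewrite (coef_eq (gam j) (fun i => if i == j then 1 else 0)) //.
rewrite (bigD1 j) //= eqxx big1 ?addr0 ?subrr; first exact: G0.
by move=> l /negbTE ->; rewrite mulr0z.
Qed.
Lemma coef0_G v : (forall j, coef v j = 0) -> G v.
Proof.
move=> h; have := coef_spec v.
by rewrite big1 ?subr0 // => j _; rewrite h mulr0z.
Qed.

Definition sig (i : 'I_k) : 'rV[int]_n := \row_l coef (delta_mx 0 l) i.

Lemma lfZ_sig i v : lfZ (sig i) v = coef v i.
Proof.
symmetry; apply: (coef_eq v (fun j => lfZ (sig j) v)) i.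
set e := fun l : 'I_n => delta_mx 0 l : 'rV[int]_n.
have hv : v = \sum_(l < n) e l *~ v 0 l.
  rewrite {1}(row_sum_delta v); apply: eq_bigr => l _.
  by rewrite -scaler_int intz.
have -> : comb (fun j => lfZ (sig j) v) =
   \sum_(l < n) comb (coef (e l)) *~ v 0 l.
  rewrite /lfZ.
  under eq_bigr => j _ do rewrite mulrz_sumr.
  rewrite exchange_big /=; apply: eq_bigr => l _.
  rewrite mulrz_suml; apply: eq_bigr => j _.
  by rewrite mxE mulrzA.
rewrite {1}hv -sumrB; apply: Gsum => l.
by rewrite -mulrzBl; apply: GMz; apply: coef_spec.
Qed.

Lemma lf_sig_realv i v : lf (realv R (sig i)) (realv R v) = (coef v i)%:~R.
Proof. by rewrite lf_realv lfZ_sig. Qed.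

Lemma sig_ge0 i x : pos gens x -> 0 <= lf (realv R (sig i)) x.
Proof.
move=> [m [c [a [ha [hc ->]]]]]; rewrite lf_sum; apply: sumr_ge0 => l _.
by rewrite lfS lf_sig_realv mulr_ge0 // ler0z coefS.
Qed.

Lemma F_sig i x : F x -> lf (realv R (sig i)) x = 0.
Proof.
move=> /hFt [[m [c [a [ha [hc hx]]]]] hx0].
have hz := pos_lf_ge0 ht ha hc.
rewrite hx in hx0 *; rewrite lf_sum big1 // => l _.
rewrite lfS lf_sig_realv.
case: (hz hx0 l) => [->|hl]; first by rewrite mul0r.
rewrite coefG ?mulr0 //.
exists (a l), 0; split; first by split=> //; apply/hFt; split=> //; apply: pos_realv.
by split; [exact: inSF0 | rewrite subr0].
Qed.

Lemma F_char x : F x <-> pos gens x /\ forall i, lf (realv R (sig i)) x = 0.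
Proof.
split.
  move=> hx; split; first by case/hFt: hx.
  by move=> i; apply: F_sig.
move=> [hp hs]; apply/hFt; split=> //.
move: hp => [m [c [a [ha [hc hx]]]]].
rewrite hx lf_sum big1 // => l _.
have hzi : forall i, c l = 0 \/ coef (a l) i = 0.
  move=> i; have := pos_lf_ge0 (@sig_ge0 i) ha hc.
  rewrite -hx => /(_ (hs i) l) [->|]; first by left.
  by rewrite lf_sig_realv => /eqP; rewrite intr_eq0 => /eqP; right.
case: (classic (c l = 0)) => [->|hcl]; first by rewrite lfS mul0r.
rewrite lfS G_t0 ?mulr0 //; apply: coef0_G => i.
by case: (hzi i).
Qed.

Lemma grp_char v : G v <-> grp (inS gens) v /\ forall i, lfZ (sig i) v = 0.
Proof.
split.
  move=> hv; split; first exact: hS.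
  by move=> i; rewrite lfZ_sig coefG.
move=> [_ h]; apply: coef0_G => j; by rewrite -lfZ_sig.
Qed.

Lemma n_gt0 (i : 'I_k) : (0 < n)%N.
Proof.
rewrite lt0n; apply/negP => /eqP hn0.
have h := lfZ_sig i (gam i); rewrite coef_gam eqxx /lfZ big1 in h => //.
by move=> j _; have := leq_trans (ltn_ord j) (eq_leq hn0).
Qed.

Lemma sig_prim i : primitive (sig i).
Proof.
rewrite /primitive.
set d := \big[gcdn/0%N]_(j < n) _.
have hd : forall j, (d%:Z %| sig i ord0 j)%Z.
  by move=> j; rewrite dvdzE absz_nat /d (bigD1 j) //=; exact: dvdn_gcdl.
have : (d%:Z %| lfZ (sig i) (gam i))%Z.
  by rewrite /lfZ; apply: rpred_sum => j _; exact: dvdz_mulr.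
by rewrite lfZ_sig coef_gam eqxx dvdz1 absz_nat => /eqP.
Qed.

Lemma sig_distinct i j :
  (forall x, hyp_section (R:=R) gens (sig i) x <-> hyp_section (R:=R) gens (sig j) x) -> i = j.
Proof.
move=> h; case: (eqVneq i j) => // hij; exfalso.
have hp : pos gens (realv R (gam i)) by apply: pos_realv.
have : hyp_section (R:=R) gens (sig i) (realv R (gam i)).
  apply/h; split => //; rewrite lf_sig_realv coef_gam eq_sym (negbTE hij).
  by rewrite mulr0z.
case=> _; rewrite lf_sig_realv coef_gam eqxx => /eqP.
by rewrite intr_eq0.
Qed.

Lemma comb_mulmx m (f : 'I_m -> 'rV[int]_n) (z : 'I_m -> int) :
  realv R (\sum_(q < m) f q *~ z q) = (\row_q (z q)%:~R) *m (\matrix_q realv R (f q)).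
Proof.
rewrite realv_sum mulmx_sum_row; apply: eq_bigr => q _.
by rewrite realvMz rowK mxE.
Qed.

Lemma realv_delta (l : 'I_n) : realv R (delta_mx 0 l : 'rV[int]_n) = delta_mx 0 l.
Proof. by apply/matrixP => a b; rewrite !mxE; case: (_ && _). Qed.

Definition fF (a : 'I_(size gens)) : 'rV[int]_n :=
  if lf t (realv R gens`_a) == 0 then gens`_a else 0.
Definition fH (i j : 'I_k) : 'rV[int]_n := if j == i then 0 else gam j.

Lemma inS_gen (a : 'I_(size gens)) : inS gens gens`_a.
Proof.
exists (fun q => (q == a) : nat); rewrite (bigD1 a) //= eqxx mulr1n big1 ?addr0 //.
by move=> q /negbTE ->; rewrite mulr0n.
Qed.
Lemma fF_inS a : inS gens (fF a).
Proof. rewrite /fF; case: ifP => _; [exact: inS_gen | exact: inS0]. Qed.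
Lemma fF_G a : G (fF a).
Proof.
rewrite /fF; case: ifP => [/eqP h|_]; last exact: G0.
exists gens`_a, 0; split.
  split; first exact: inS_gen.
  by apply/hFt; split => //; apply/pos_realv/inS_gen.
by split; [exact: inSF0 | rewrite subr0].
Qed.

Lemma inSF_comb b : inSF gens F b ->
  exists c : 'I_(size gens) -> nat, b = \sum_a fF a *+ c a.
Proof.
move=> [[c hb] /hFt [_ hb0]]; exists c.
have hb0' : lf t (\sum_a (c a)%:R *: realv R gens`_a) = 0.
  by rewrite -hb0 hb realv_sum; congr lf; apply: eq_bigr => a _; rewrite realvMn.
have hz := pos_lf_ge0 ht (@inS_gen) (fun a => ler0n R (c a)) hb0'.
rewrite {1}hb; apply: eq_bigr => a _; rewrite /fF; case: eqP => // hne.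
case: (hz a) => [/eqP|//]; rewrite pnatr_eq0 => /eqP ->.
by rewrite !mulr0n.
Qed.

Lemma G_comb g : G g -> exists zz : 'I_(size gens) -> int, g = \sum_a fF a *~ zz a.
Proof.
move=> [b [b' [hb [hb' ->]]]].
have [c ->] := inSF_comb _ hb; have [c' ->] := inSF_comb _ hb'.
exists (fun a => (c a)%:Z - (c' a)%:Z).
by rewrite -sumrB; apply: eq_bigr => a _; rewrite mulrzBr -!pmulrn.
Qed.

Lemma span_int i v : exists (z1 : 'I_(size gens) -> int) (z2 : 'I_k -> int) (c : int),
  v = \sum_a fF a *~ z1 a + \sum_j fH i j *~ z2 j + gam i *~ c.
Proof.
have [z1 hz1] := G_comb _ (coef_spec v).
exists z1, (coef v), (coef v i).
rewrite -hz1 -addrA.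
have -> : \sum_j fH i j *~ coef v j + gam i *~ coef v i = comb (coef v).
  rewrite [RHS](bigD1 i) //= [in LHS](bigD1 i) //= /fH eqxx mul0rz add0r addrC.
  congr (_ + _); apply: eq_bigr => j /negbTE hj; by rewrite hj.
by rewrite subrK.
Qed.

Lemma span_gens v : exists z : 'I_(size gens) -> int, v = \sum_(a < size gens) gens`_a *~ z a.
Proof.
have [s [s' [[c ->] [[c' ->] ->]]]] := hS v.
exists (fun a => (c a)%:Z - (c' a)%:Z).
by rewrite -sumrB; apply: eq_bigr => a _; rewrite mulrzBr -!pmulrn.
Qed.

Lemma sig_facet i : is_facet gens (hyp_section (R:=R) gens (sig i)).
Proof.
split.
  by exists (realv R (sig i)); split; [exact: sig_ge0 | done].
have hn := n_gt0 i.
exists n.-1; split; last by rewrite prednK.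
have hub : forall m (vs : 'I_m -> 'rV[R]_n),
    (forall q, hyp_section (R:=R) gens (sig i) (vs q)) -> (\rank (\matrix_q vs q) + 1 <= n)%N.
  move=> m vs hvs.
  apply: (@rank_ker R n m 1 _ (fun _ => realv R (sig i)) (fun _ => realv R (gam i))).
    by move=> a b; rewrite lf_sig_realv coef_gam eqxx !ord1 eqxx.
  by move=> q a; rewrite rowK; exact: (hvs q).2.
split; last first.
  move=> m vs hvs; have := hub m vs hvs.
  by rewrite addn1 => h; rewrite -ltnS prednK.
pose M1 := \matrix_a realv R (fF a).
pose M2 := \matrix_j realv R (fH i j).
pose M := col_mx M1 M2.
have hmem : forall q, hyp_section (R:=R) gens (sig i) (row q M).
  move=> q; rewrite -(splitK q); case: (split q) => a /=.
    rewrite /M rowKu rowK; split; first by apply: pos_realv; exact: fF_inS.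
    by rewrite lf_sig_realv coefG //; exact: fF_G.
  rewrite /M rowKd rowK /fH; case: eqP => [_|/eqP hai].
    by split; [rewrite realv0; exact: pos0 | rewrite realv0 lf0].
  split; first by apply: pos_realv.
  by rewrite lf_sig_realv coef_gam eq_sym (negbTE hai) mulr0z.
exists (size gens + k)%N, (fun q => row q M); split => //.
have -> : \matrix_q row q M = M by apply/matrixP => a b; rewrite !mxE.
apply/eqP; rewrite eqn_leq; apply/andP; split.
  have := hub _ (fun q => row q M) hmem.
  have -> : \matrix_q row q M = M by apply/matrixP => a b; rewrite !mxE.
  by rewrite addn1 => h; rewrite -ltnS prednK.
rewrite -ltnS prednK // -addn1.
apply: (@rank_full1 R n _ M (realv R (gam i))) => l.
have [z1 [z2 [c hv]]] := span_int i (delta_mx 0 l).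
exists (row_mx (\row_a (z1 a)%:~R) (\row_j (z2 j)%:~R)), c%:~R.
rewrite -(realv_delta l) hv !realvD realvMz !comb_mulmx /M mul_row_col.
done.
Qed.

Lemma u_expand (u : 'rV[R]_n) : (forall x, F x -> lf u x = 0) ->
  forall x, pos gens x ->
  lf u x = \sum_j lf u (realv R (gam j)) * lf (realv R (sig j)) x.
Proof.
move=> hu.
have hv : forall v, lf u (realv R v) = \sum_j lf u (realv R (gam j)) * (coef v j)%:~R.
  move=> v; rewrite -{1}(subrK (comb (coef v)) v) realvD lfD.
  have -> : lf u (realv R (v - comb (coef v))) = 0.
    have [b [b' [[_ hb] [[_ hb'] ->]]]] := coef_spec v.
    by rewrite realvB lfB !hu ?subrr.
  rewrite add0r realv_sum lf_sum; apply: eq_bigr => j _.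
  by rewrite realvMz lfS mulrC.
move=> x [m [c [a [ha [hc ->]]]]].
rewrite lf_sum.
under eq_bigr => l _ do rewrite lfS hv mulr_sumr.
rewrite exchange_big /=; apply: eq_bigr => j _.
rewrite lf_sum mulr_sumr; apply: eq_bigr => l _.
by rewrite lfS lf_sig_realv mulrCA.
Qed.

Lemma facet_unique (Gs : 'rV[R]_n -> Prop) : is_facet gens Gs ->
  (forall x, F x -> Gs x) ->
  exists i, forall x, Gs x <-> hyp_section (R:=R) gens (sig i) x.
Proof.
move=> [[u [hu hGu]] [d [[[m [vs [hvs hrk]]] hub] hd]]] hFG.
have hFu : forall x, F x -> lf u x = 0 by move=> x /hFG /hGu [].
pose uj j := lf u (realv R (gam j)).
have huj : forall j, 0 <= uj j by move=> j; apply: hu; apply: pos_realv.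
have hexp := u_expand _ hFu.
have hterm : forall x, Gs x -> forall j, uj j = 0 \/ lf (realv R (sig j)) x = 0.
  move=> x /hGu [hx hx0] j.
  have hge : forall j, predT j -> 0 <= uj j * lf (realv R (sig j)) x.
    by move=> j' _; rewrite mulr_ge0 // sig_ge0.
  have := psumr_eq0P hge; rewrite -(hexp x hx) hx0 => /(_ erefl j isT) /eqP.
  by rewrite mulf_eq0 => /orP [/eqP|/eqP]; auto.
case: (classic (exists i, uj i != 0)) => [[i hi]|hall]; last first.
  exfalso.
  have h0 : forall j, uj j = 0.
    by move=> j; case: (eqVneq (uj j) 0) => // hj; exfalso; apply: hall; exists j.
  have hin : forall a : 'I_(size gens), Gs (realv R gens`_a).
    move=> a; have hp : pos gens (realv R gens`_a) by apply/pos_realv/inS_gen.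
    apply/hGu; split => //; rewrite (hexp _ hp) big1 // => j _.
    by rewrite -/(uj j) h0 mul0r.
  have h2 := hub _ (fun a : 'I_(size gens) => realv R gens`_a) hin.
  have h1 : (n <= \rank (\matrix_(a < size gens) realv R gens`_a))%N.
    apply: rank_full => l; have [z hz] := span_gens (delta_mx 0 l).
    by exists (\row_a (z a)%:~R); rewrite -(realv_delta l) hz comb_mulmx.
  by have := leq_trans h1 h2; rewrite -hd ltnn.
case: (classic (exists i', i' != i /\ uj i' != 0)) => [[i' [hii' hi']]|hone].
  exfalso.
  pose sel := fun a : 'I_2 => if a == ord0 then i else i'.
  have hsel : forall a b, (sel a == sel b) = (a == b).
    rewrite /sel => a b.
    case: a => [[|[|a']] ha] //; case: b => [[|[|b']] hb] //=;
      by rewrite ?eqxx // ?(negbTE hii') // eq_sym (negbTE hii').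
  have hk := @rank_ker R n m 2 (\matrix_q vs q) (fun a => realv R (sig (sel a)))
     (fun b => realv R (gam (sel b))).
  rewrite hrk in hk.
  suff : (d + 2 <= n)%N by rewrite -hd addn2 ltnn.
  apply: hk.
    by move=> a b; rewrite lf_sig_realv coef_gam hsel; case: (a == b).
  move=> q a; rewrite rowK; case: (hterm _ (hvs q) (sel a)) => // hz.
  exfalso; move: hz; rewrite /sel; case: ifP => _ /eqP.
    by rewrite (negbTE hi).
  by rewrite (negbTE hi').
exists i => x; split.
  move=> hx; split; first by case/hGu: hx.
  by case: (hterm x hx i) => // /eqP; rewrite (negbTE hi).
move=> [hx hx0]; apply/hGu; split => //.
rewrite (hexp x hx) big1 // => j _.
case: (eqVneq j i) => [->|hji]; first by rewrite hx0 mulr0.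
have hu0 : uj j = 0.
  by case: (eqVneq (uj j) 0) => // hj; exfalso; apply: hone; exists j.
by rewrite /uj in hu0; rewrite hu0 mul0r.
Qed.

Lemma main_sec : exists sigma : 'I_k -> 'rV[int]_n,
        (forall i, [/\ primitive (sigma i),
                       (forall x, pos gens x -> 0 <= lf (realv R (sigma i)) x),
                       is_facet gens (hyp_section (R:=R) gens (sigma i)) &
                       (forall x, F x -> hyp_section (R:=R) gens (sigma i) x)]) /\
        (forall i j, (forall x, hyp_section (R:=R) gens (sigma i) x <->
                                hyp_section (R:=R) gens (sigma j) x) -> i = j) /\
        (forall G : 'rV[R]_n -> Prop, is_facet gens G -> (forall x, F x -> G x) ->
           exists i, forall x, G x <-> hyp_section (R:=R) gens (sigma i) x) /\
        (forall x, F x <-> (pos gens x /\ forall i, hyp_section (R:=R) gens (sigma i) x)) /\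
        (forall i j, lfZ (sigma i) (gam j) = (if i == j then 1 else 0)) /\
        (forall v, grp (inSF gens F) v <->
                   (grp (inS gens) v /\ forall i, lfZ (sigma i) v = 0)).
Proof.
exists sig; split.
  move=> i; split.
  - exact: sig_prim.
  - exact: sig_ge0.
  - exact: sig_facet.
  - move=> x hx; split; first by case/hFt: hx.
    exact: F_sig.
split; first exact: sig_distinct.
split; first exact: facet_unique.
split.
  move=> x; split.
    move=> hx; have [hp hs] := (F_char x).1 hx; split => // i; by split.
  move=> [hp hs]; apply/F_char; split => // i; exact: (hs i).2.
split; first by move=> i j; rewrite lfZ_sig coef_gam.
exact: grp_char.
Qed.

End Main.

End Aux2.
Import Aux2.

Theorem mainTheorem4 (K : fieldType) (R : realFieldType) (n : nat)
    (gens : seq 'rV[int]_n) (hS : affine_semigroup gens)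
    (F : 'rV[R]_n -> Prop) (hF : is_face gens F) (hFne : exists x, F x)
    (k : nat) (gam : 'I_k -> 'rV[int]_n) (hgam : forall j, inS gens (gam j))
    (hfree : free_basis_mod gens F gam) :
  exists sigma : 'I_k -> 'rV[int]_n,
    (* (1) F_i = pos(S) ∩ H_i are facets containing F, sigma_i the
           primitive linear form associated with H_i *)
        (forall i, [/\ primitive (sigma i),
                       (forall x, pos gens x -> 0 <= lf (realv R (sigma i)) x),
                       is_facet gens (hyp_section (R:=R) gens (sigma i)) &
                       (forall x, F x -> hyp_section (R:=R) gens (sigma i) x)]) /\
        (* the F_i are pairwise distinct *)
        (forall i j, (forall x, hyp_section (R:=R) gens (sigma i) x <->
                                hyp_section (R:=R) gens (sigma j) x) -> i = j) /\
        (* they are all the facets containing F *)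
        (forall G : 'rV[R]_n -> Prop, is_facet gens G -> (forall x, F x -> G x) ->
           exists i, forall x, G x <-> hyp_section (R:=R) gens (sigma i) x) /\
        (* F = F_1 ∩ ... ∩ F_k (inside pos(S)) *)
        (forall x, F x <-> (pos gens x /\ forall i, hyp_section (R:=R) gens (sigma i) x)) /\
        (* (2) sigma_i(gam_j) = delta_ij *)
        (forall i j, lfZ (sigma i) (gam j) = (if i == j then 1 else 0)) /\
        (* (3) grp(S ∩ F) = grp(S) ∩ H_1 ∩ ... ∩ H_k *)
        (forall v, grp (inSF gens F) v <->
                   (grp (inS gens) v /\ forall i, lfZ (sigma i) v = 0)).
Proof.
have [t [ht hFt]] := hF.
exact: (@main_sec R n gens F t k gam hS ht hFt hgam hfree).
Qed.
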